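(* Let $(R,\cdot,\mathfrak e)$ be a symmetric partial $A$-module algebra such that the algebra $A\cdot R$ has nondegenerate product. Then $A\cdot R=\mathfrak e(A)R$ and $A\cdot R=R\,\mathfrak e(A)$.
   Context: $\Bbbk$ is a field; $M(R)$ is the multiplier algebra of an algebra $R$ with nondegenerate product. $A$ is a regular multiplier Hopf algebra with comultiplication $\Delta$, counit $\varepsilon$, bijective antipode $S$ (Sweedler notation with covering conventions). $A\cdot R$ is the linear span of the elements $a\cdot x$; $\mathfrak e(A)R$ and $R\mathfrak e(A)$ are the spans of $\mathfrak e(a)x$, resp. $x\mathfrak e(a)$. A partial $A$-module algebra is a triple $(R,\cdot,\mathfrak e)$, $\cdot:A\otimes R\to R$ and $\mathfrak e:A\to M(R)$ linear, such that for all $a,b\in A$, $x,y\in R$: (i) $a\cdot(x(b\cdot y))=(a_{(1)}\cdot x)(a_{(2)}b\cdot y)$; (ii) $\mathfrak e(a)(b\cdot x)=a_{(1)}\cdot(S(a_{(2)})b\cdot x)$ and $\mathfrak e(A)R\subseteq A\cdot R$; (iii) given $a_1,\dots,a_n\in A$, $x_1,\dots,x_m\in R$ there is $b\in A$ with $a_ib=a_i=ba_i$ and $a_i\cdot x_j=a_i\cdot(b\cdot x_j)$; (iv) $A\cdot x=0$ implies $x=0$. It is symmetric if moreover (v) $a\cdot((b\cdot x)y)=(a_{(1)}b\cdot x)(a_{(2)}\cdot y)$; (vi) $(b\cdot x)\mathfrak e(a)=a_{(2)}\cdot(S^{-1}(a_{(1)})b\cdot x)$; (vii) $R\mathfrak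 e(A)\subseteq A\cdot R$. *)

(* Defs.v *)
(* Regular multiplier Hopf algebras and symmetric partial
   module algebras over a field K, with all algebras NON-UNITAL (bilinear
   associative products on K-vector spaces), tensor products given by their
   universal property, and multipliers as pairs (left action, right action). *)
From HB Require Import structures.
From mathcomp Require Import all_boot all_order all_algebra.
Set Implicit Arguments. Unset Strict Implicit. Unset Printing Implicit Defensive.
Import GRing.Theory.
Local Open Scope ring_scope.

Section Generic.
Variable K : fieldType.

Definition bilinear_map (U V W : lmodType K) (f : U -> V -> W) : Prop :=
  (forall v, linear (fun u => f u v)) /\ (forall u, linear (f u)).

Definition trilinear_map (U V W X : lmodType K) (f : U -> V -> W -> X) : Prop :=
  (forall v w, linear (fun u => f u v w)) /\
  (forall u w, linear (fun v => f u v w)) /\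
  (forall u v, linear (f u v)).

Definition is_tensor2 (U V W : lmodType K) (t : U -> V -> W) : Prop :=
  bilinear_map t /\
  (forall (X : lmodType K) (f : U -> V -> X), bilinear_map f ->
     exists g : W -> X, linear g /\ forall u v, g (t u v) = f u v) /\
  (forall (X : lmodType K) (g1 g2 : W -> X), linear g1 -> linear g2 ->
     (forall u v, g1 (t u v) = g2 (t u v)) -> g1 =1 g2).

Definition is_tensor3 (U1 U2 U3 W : lmodType K) (t : U1 -> U2 -> U3 -> W) : Prop :=
  trilinear_map t /\
  (forall (X : lmodType K) (f : U1 -> U2 -> U3 -> X), trilinear_map f ->
     exists g : W -> X, linear g /\ forall u v w, g (t u v w) = f u v w) /\
  (forall (X : lmodType K) (g1 g2 : W -> X), linear g1 -> linear g2 ->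
     (forall u v w, g1 (t u v w) = g2 (t u v w)) -> g1 =1 g2).

Definition is_algebra (V : lmodType K) (m : V -> V -> V) : Prop :=
  bilinear_map m /\ associative m.

Definition nondeg_on (V : lmodType K) (P : V -> Prop) (m : V -> V -> V) : Prop :=
  (forall x, P x -> (forall y, P y -> m x y = 0) -> x = 0) /\
  (forall x, P x -> (forall y, P y -> m y x = 0) -> x = 0).

Definition nondeg (V : lmodType K) (m : V -> V -> V) : Prop :=
  nondeg_on (fun _ => True) m.

(* (L, Rt) is a multiplier of (V, m):  L x = "M x",  Rt x = "x M" *)
Definition is_multiplier (V : lmodType K) (m : V -> V -> V) (L Rt : V -> V) : Prop :=
  (forall x y, L (m x y) = m (L x) y) /\
  (forall x y, Rt (m x y) = m x (Rt y)) /\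
  (forall x y, m (Rt x) y = m x (L y)).

Definition span (V : lmodType K) (P : V -> Prop) (v : V) : Prop :=
  exists s : seq (K * V), (forall p, p \in s -> P p.2) /\
                          v = \sum_(p <- s) p.1 *: p.2.

End Generic.

(* Data of a multiplier Hopf algebra A, with chosen tensor products
   AA = A (x) A, AAA = A (x) A (x) A. *)
Record MHAData (K : fieldType) := {
  hA : lmodType K;
  hAA : lmodType K;
  hAAA : lmodType K;
  mulA : hA -> hA -> hA;
  tens2 : hA -> hA -> hAA;
  mulAA : hAA -> hAA -> hAA;
  tens3 : hA -> hA -> hA -> hAAA;
  DeltaL : hA -> hAA -> hAA;             (* x |-> Delta(a) x *)
  DeltaR : hA -> hAA -> hAA;             (* x |-> x Delta(a) *)
  cov1 : hA -> hA -> hAA;                (* cov1 a b = Delta(a)(1 (x) b) *)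
  cov2 : hA -> hA -> hAA;                (* cov2 a b = (a (x) 1)Delta(b) *)
  cov3 : hA -> hA -> hAA;                (* cov3 a b = Delta(a)(b (x) 1) *)
  cov4 : hA -> hA -> hAA;                (* cov4 a b = (1 (x) a)Delta(b) *)
  counit : hA -> K;
  antipode : hA -> hA
}.

Arguments mulA {K} m : rename. Arguments tens2 {K} m : rename. Arguments mulAA {K} m : rename.
Arguments tens3 {K} m : rename. Arguments DeltaL {K} m : rename. Arguments DeltaR {K} m : rename.
Arguments cov1 {K} m : rename. Arguments cov2 {K} m : rename. Arguments cov3 {K} m : rename.
Arguments cov4 {K} m : rename. Arguments counit {K} m : rename. Arguments antipode {K} m : rename.

Section MHA.
Variable K : fieldType.
Variable H : MHAData K.
Local Notation A := (hA H).
Local Notation AA := (hAA H).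
Local Notation AAA := (hAAA H).
Local Notation mA := (mulA H).
Local Notation mAA := (mulAA H).
Local Notation t2 := (tens2 H).
Local Notation t3 := (tens3 H).
Local Notation eps := (counit H).
Local Notation S := (antipode H).

Definition tensor_map_bijective (f : A -> A -> AA) : Prop :=
  exists T : AA -> AA, linear T /\ bijective T /\ forall a b, T (t2 a b) = f a b.

(* coassociativity:
   (a(x)1(x)1)(Delta(x)id)(Delta(b)(1(x)c)) = (id(x)Delta)((a(x)1)Delta(b))(1(x)1(x)c) *)
Definition coassociative_cov : Prop :=
  forall (tr : AA -> A -> AAA) (tl : A -> AA -> AAA),
    (forall q, linear (fun x => tr x q)) ->
    (forall x y q, tr (t2 x y) q = t3 x y q) ->
    (forall p, linear (tl p)) ->
    (forall p y z, tl p (t2 y z) = t3 p y z) ->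
  forall (a b c : A) (Phi Psi : AA -> AAA), linear Phi -> linear Psi ->
    (forall p q, Phi (t2 p q) = tr (cov2 H a p) q) ->
    (forall p q, Psi (t2 p q) = tl p (cov1 H q c)) ->
    Phi (cov1 H b c) = Psi (cov2 H a b).

Definition is_regular_multiplier_Hopf_algebra : Prop :=
  [/\
   is_tensor2 t2 /\ is_tensor3 t3,
   is_algebra mA /\ nondeg mA,
   bilinear_map mAA /\
     (forall a b c d, mAA (t2 a b) (t2 c d) = t2 (mA a c) (mA b d)),
   [/\ forall a, is_multiplier mAA (DeltaL H a) (DeltaR H a),
       forall x, linear (fun a => DeltaL H a x),
       forall x, linear (fun a => DeltaR H a x),
       forall a b x, DeltaL H (mA a b) x = DeltaL H a (DeltaL H b x) &
       forall a b x, DeltaR H (mA a b) x = DeltaR H b (DeltaR H a x)] &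
   [/\
   (* covering: the four products lie in A (x) A (equalities of multipliers,
      tested on simple tensors; by nondegeneracy one side suffices) *)
   [/\ forall a b c d, DeltaL H a (t2 c (mA b d)) = mAA (cov1 H a b) (t2 c d),
       forall a b c d, DeltaR H b (t2 (mA c a) d) = mAA (t2 c d) (cov2 H a b),
       forall a b c d, DeltaL H a (t2 (mA b c) d) = mAA (cov3 H a b) (t2 c d) &
       forall a b c d, DeltaR H b (t2 c (mA d a)) = mAA (t2 c d) (cov4 H a b)],
   coassociative_cov,
   (* T1, T2 bijective (multiplier Hopf algebra); the analogous maps for
      Delta^cop bijective (regularity) *)
   [/\ tensor_map_bijective (cov1 H), tensor_map_bijective (cov2 H),
       tensor_map_bijective (cov3 H) & tensor_map_bijective (cov4 H)],
   (* counit: (eps(x)id)(Delta(a)(1(x)b)) = ab, (id(x)eps)((a(x)1)Delta(b)) = ab *)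
   [/\ scalar eps,
       forall (g : AA -> A), linear g -> (forall c d, g (t2 c d) = eps c *: d) ->
         forall a b, g (cov1 H a b) = mA a b &
       forall (g : AA -> A), linear g -> (forall c d, g (t2 c d) = eps d *: c) ->
         forall a b, g (cov2 H a b) = mA a b] &
   (* antipode: m(S(x)id)(Delta(a)(1(x)b)) = eps(a) b,
                m(id(x)S)((a(x)1)Delta(b)) = eps(b) a,  S bijective *)
   [/\ linear S,
       forall (g : AA -> A), linear g -> (forall c d, g (t2 c d) = mA (S c) d) ->
         forall a b, g (cov1 H a b) = eps a *: b,
       forall (g : AA -> A), linear g -> (forall c d, g (t2 c d) = mA c (S d)) ->
         forall a b, g (cov2 H a b) = eps b *: a &
       bijective S]]].

(* Partial A-module algebras.  R : nondegenerate algebra, act a x = a . x,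
   e(a) = (eL a, eR a) in M(R), i.e.  eL a x = e(a) x,  eR a x = x e(a). *)
Variables (R : lmodType K) (mR : R -> R -> R) (act : A -> R -> R)
          (eL eR : A -> R -> R).

Definition AdotR : R -> Prop := span (fun z => exists a x, z = act a x).
Definition eA_R : R -> Prop := span (fun z => exists a x, z = eL a x).
Definition R_eA : R -> Prop := span (fun z => exists a x, z = eR a x).

Definition partial_module_algebra : Prop :=
  [/\
   bilinear_map act,
   [/\ forall a, is_multiplier mR (eL a) (eR a),
       forall x, linear (fun a => eL a x) &
       forall x, linear (fun a => eR a x)],
   (* (i)  a.(x(b.y)) = (a_(1).x)(a_(2)b.y) *)
   (forall (x y : R) (F : AA -> R), linear F ->
     (forall c d, F (t2 c d) = mR (act c x) (act d y)) ->
     forall a b, act a (mR x (act b y)) = F (cov1 H a b)) /\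
   (* (ii) e(a)(b.x) = a_(1).(S(a_(2))b.x), using
           a_(1) (x) S(a_(2))b = (id(x)S)((1(x)S^-1(b))Delta(a)),
           and e(A)R \subset A.R *)
   ((forall Sinv : A -> A, cancel S Sinv -> cancel Sinv S ->
     forall (x : R) (G : AA -> R), linear G ->
     (forall c d, G (t2 c d) = act c (act (S d) x)) ->
     forall a b, eL a (act b x) = G (cov4 H (Sinv b) a)) /\
   (forall z, eA_R z -> AdotR z)),
   forall (as_ : seq A) (xs : seq R), exists b : A,
     forall a, a \in as_ ->
       [/\ mA a b = a, mA b a = a &
           forall x, x \in xs -> act a x = act a (act b x)] &
   forall x : R, (forall a, act a x = 0) -> x = 0].

Definition symmetric_partial_module_algebra : Prop :=
  [/\ partial_module_algebra,
   (* (v)  a.((b.x)y) = (a_(1)b.x)(a_(2).y) *)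
   forall (x y : R) (F : AA -> R), linear F ->
     (forall c d, F (t2 c d) = mR (act c x) (act d y)) ->
     forall a b, act a (mR (act b x) y) = F (cov3 H a b),
   (* (vi) (b.x)e(a) = a_(2).(S^-1(a_(1))b.x), using
           S^-1(a_(1))b (x) a_(2) = (S^-1(x)id)((S(b)(x)1)Delta(a)) *)
   forall Sinv : A -> A, cancel S Sinv -> cancel Sinv S ->
     forall (x : R) (G : AA -> R), linear G ->
     (forall c d, G (t2 c d) = act d (act (Sinv c) x)) ->
     forall a b, eR a (act b x) = G (cov2 H (S b) a) &
   forall z, R_eA z -> AdotR z].

End MHA.

Arguments is_regular_multiplier_Hopf_algebra {K} H.
Arguments symmetric_partial_module_algebra {K} H {R} mR act eL eR.
Arguments partial_module_algebra {K} H {R} mR act eL eR.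
Arguments AdotR {K H R} act.
Arguments eA_R {K H R} eL.
Arguments R_eA {K H R} eR.

(* Main.v *)
Require Import Defs.

From HB Require Import structures.
From mathcomp Require Import all_boot all_order all_algebra.
From Stdlib Require Import ClassicalEpsilon.
Set Implicit Arguments. Unset Strict Implicit. Unset Printing Implicit Defensive.
Import GRing.Theory.
Local Open Scope ring_scope.

Definition pb (P : Prop) : bool := if excluded_middle_informative P then true else false.
Lemma pbP (P : Prop) : reflect P (pb P).
Proof. rewrite /pb; case: excluded_middle_informative => h; constructor => //. Qed.

Section SpanLemmas.
Variables (K : fieldType) (W : lmodType K) (P : W -> Prop).

Lemma span0 : Defs.span P 0.
Proof. by exists [::]; rewrite big_nil. Qed.

Lemma spanZD a u v : Defs.span P u -> Defs.span P v -> Defs.span P (a *: u + v).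
Proof.
move=> [s [Hs ->]] [s' [Hs' ->]].
exists ([seq (a * p.1, p.2) | p <- s] ++ s'); split.
  move=> p; rewrite mem_cat => /orP [/mapP [q qs ->]|ps].
    exact: (Hs q qs).
  exact: (Hs' p ps).
rewrite big_cat big_map /= scaler_sumr; congr (_ + _).
by apply: eq_bigr => p _; rewrite scalerA.
Qed.

Lemma span_gen z : P z -> Defs.span P z.
Proof. by move=> Pz; exists [:: (1, z)]; split; [move=> p; rewrite inE => /eqP -> | rewrite big_seq1 scale1r]. Qed.

End SpanLemmas.

Lemma span_lin (K : fieldType) (W X : lmodType K) (P : W -> Prop) (Q : X -> Prop)
  (f : W -> X) : linear f -> (forall y, P y -> Defs.span Q (f y)) ->
  forall w, Defs.span P w -> Defs.span Q (f w).
Proof.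
move=> lf hPQ w [s [Hs ->]]; elim: s Hs => [|p s IH] Hs.
  have f0 : f 0 = 0.
    have := lf 1 0 0; rewrite !scale1r !addr0 => /(congr1 (fun z => z - f 0)).
    by rewrite subrr addrK => h; rewrite -h.
  by rewrite big_nil f0; exact: span0.
rewrite big_cons lf; apply: spanZD.
  by apply: hPQ; apply: Hs; rewrite inE eqxx.
by apply: IH => q qs; apply: Hs; rewrite inE qs orbT.
Qed.

Section TensorSpan.
Variables (K : fieldType) (U V W : lmodType K) (t : U -> V -> W).
Definition simpleT (z : W) := exists u v, z = t u v.
Definition inspan : {pred W} := fun w => pb (Defs.span simpleT w).

Fact inspan_closed : GRing.submod_closed inspan.
Proof.
split; first by apply/pbP; exact: span0.
by move=> a u v /pbP hu /pbP hv; apply/pbP; exact: spanZD.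
Qed.

HB.instance Definition _ := GRing.isSubmodClosed.Build K W inspan inspan_closed.
Record SW := MkSW { swval : W; _ : swval \in inspan }.
HB.instance Definition _ := [isSub for swval].
HB.instance Definition _ := [Choice of SW by <:].
HB.instance Definition _ := [SubChoice_isSubLmodule of SW by <:].

Lemma tensor_span : is_tensor2 t -> forall w, Defs.span simpleT w.
Proof.
move=> [[bl br] [ex uniq]].
have tin : forall u v, t u v \in inspan.
  by move=> u v; apply/pbP; apply: span_gen; exists u, v.
pose f (u : U) (v : V) : SW := MkSW (tin u v).
have bf : bilinear_map f.
  split=> [v|u] a x y; apply: val_inj => /=; [exact: bl | exact: br].
have [g [lg hg]] := ex _ f bf.
have lvg : linear (fun w => val (g w)).
  by move=> a x y /=; rewrite lg.
have lid : linear (fun w : W => w) by [].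
have H : forall w, val (g w) = w.
  by apply: (uniq _ _ _ lvg lid) => u v /=; rewrite hg.
move=> w; rewrite -(H w); exact: (elimT (pbP _) (valP (g w))).
Qed.
End TensorSpan.

Theorem mainTheorem12 (K : fieldType) (H : MHAData K)
  (R : lmodType K) (mR : R -> R -> R) (act : hA H -> R -> R)
  (eL eR : hA H -> R -> R) :
  is_regular_multiplier_Hopf_algebra H ->
  is_algebra mR -> nondeg mR ->
  symmetric_partial_module_algebra H mR act eL eR ->
  nondeg_on (AdotR act) mR ->
  (forall z, AdotR act z <-> eA_R eL z) /\
  (forall z, AdotR act z <-> R_eA eR z).
Proof.
move=> HH _ _ Hsym _.
case: HH => [[t2T _] _ _ _ [_ _ [B1 B2 B3 B4] _ [linS _ _ bijS]]].
case: Hsym => [[bact _ [_ [Hii Hsub1]] Hiii _] _ Hvi Hsub2].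
case: bijS => Sinv SK KS.
have actl : forall x k u v, act (k *: u + v) x = k *: act u x + act v x.
  by move=> x; exact: (bact.1 x).
have actr : forall c k u v, act c (k *: u + v) = k *: act c u + act c v.
  by move=> c; exact: (bact.2 c).
have linS' : forall k u v, antipode H (k *: u + v) = k *: antipode H u + antipode H v.
  exact: linS.
have linSi : forall k u v, Sinv (k *: u + v) = k *: Sinv u + Sinv v.
  move=> k u v; rewrite -{1}(KS u) -{1}(KS v) -linS' SK //.
have [_ [ex _]] := t2T.
have lu : forall a x, exists b, act a x = act a (act b x).
  move=> a x; have [b Hb] := Hiii [:: a] [:: x].
  have [_ _ h] := Hb a (mem_head _ _); exists b; exact: h (mem_head _ _).
split=> z; split.
- rewrite /AdotR /eA_R => hz.
  apply: (span_lin (f := fun w => w)) hz => // y [a [x ->]].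
  pose f c d := act c (act (antipode H d) x).
  have bf : bilinear_map f.
    split=> [v|u] k p q; rewrite /f ?actl //.
    by rewrite linS' actl actr.
  have [G [lG hG]] := ex _ f bf.
  case: B4 => T [lT [[Ti TK KT] hT]].
  have [b ->] := lu a x.
  have -> : act a (act b x) = G (T (Ti (tens2 H a (Sinv b)))).
    by rewrite KT hG /f KS.
  apply: (span_lin (f := fun w => G (T w)) (P := simpleT (tens2 H))).
  + move=> k p q /=; rewrite lT; exact: lG.
  + move=> w [c [d ->]]; apply: span_gen; exists d, (act (antipode H c) x).
    by rewrite hT (Hii Sinv SK KS x G lG hG) SK.
  + exact: tensor_span.
- exact: Hsub1.
- rewrite /AdotR /R_eA => hz.
  apply: (span_lin (f := fun w => w)) hz => // y [a [x ->]].
  pose f c d := act d (act (Sinv c) x).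
  have bf : bilinear_map f.
    split=> [v|u] k p q; rewrite /f ?actl //.
    by rewrite linSi actl actr.
  have [G [lG hG]] := ex _ f bf.
  case: B2 => T [lT [[Ti TK KT] hT]].
  have [b ->] := lu a x.
  have -> : act a (act b x) = G (T (Ti (tens2 H (antipode H b) a))).
    by rewrite KT hG /f SK.
  apply: (span_lin (f := fun w => G (T w)) (P := simpleT (tens2 H))).
  + move=> k p q /=; rewrite lT; exact: lG.
  + move=> w [c [d ->]]; apply: span_gen; exists d, (act (Sinv c) x).
    by rewrite hT (Hvi Sinv SK KS x G lG hG) KS.
  + exact: tensor_span.
- exact: Hsub2.
Qed.
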